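(* Consider the family of NSG-compositions $x_1+\cdots+x_{m-1}$ with maximum $5$ whose last maximal part $x_l=5$ (i.e. $x_l=5$ and $x_i<5$ for $i>l$) satisfies $3l\ge m-1$. Its growth-rate is at most $1/\rho$, where $\rho=0.6189\ldots>\omega^{-1}$ is the positive root of $1-I_5I_4^2$, with $I_4=3q^4+4q^5+3q^6+2q^7+q^8$ and $I_5=4q^5+5q^6+4q^7+3q^8+2q^9+q^{10}$. In particular this growth-rate is strictly smaller than $\omega=\frac{1+\sqrt5}2$.
   Context: An NSG-composition is a composition $x_1+\cdots+x_{m-1}$ of positive integers satisfying $x_{s+t}\le x_s+x_t$ and $x_{m-s-t}\le x_{m-s}+x_{m-t}+1$ for all $s,t\ge1$, $s+t<m$ (equivalently, the Kunz vector of a numerical semigroup of multiplicity $m$); its genus is $\sum x_j$. The growth-rate of a family is $\limsup_{g\to\infty}a_g^{1/g}$ with $a_g$ the number of members of genus $g$. *)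

(* Defs.v *)
From HB Require Import structures.
From mathcomp Require Import all_boot all_order all_algebra.
From mathcomp Require Import all_classical all_reals all_analysis.
Set Implicit Arguments. Unset Strict Implicit. Unset Printing Implicit Defensive.
Import Order.TTheory GRing.Theory Num.Theory.

(* A composition x_1 + ... + x_{m-1} is represented by the list
   s = [:: x_1; ...; x_{m-1}], so m - 1 = size s and x_j = nth 0 s j.-1. *)
Definition part (s : seq nat) (j : nat) : nat := nth 0 s j.-1.

Definition is_NSG_composition (x : seq nat) : Prop :=
  let n := size x in
  (0 < n)%N /\
  (forall j, (1 <= j <= n)%N -> (0 < part x j)%N) /\
  (forall s t, (1 <= s)%N -> (1 <= t)%N -> (s + t <= n)%N ->
     (part x (s + t) <= part x s + part x t)%N /\
     (part x (n.+1 - s - t) <= part x (n.+1 - s) + part x (n.+1 - t) + 1)%N).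

Definition genus (x : seq nat) : nat := sumn x.

Definition in_family (x : seq nat) : Prop :=
  is_NSG_composition x /\
  (forall j, (1 <= j <= size x)%N -> (part x j <= 5)%N) /\
  exists l, [/\ (1 <= l <= size x)%N, part x l = 5%N,
     (forall i, (l < i <= size x)%N -> (part x i < 5)%N) &
     (size x <= 3 * l)%N].

(* Every composition of
   genus g has at most g parts, each at most g, so it is enumerated exactly
   once among the k-tuples over 'I_g.+1 with k <= g. *)
Definition a_count (g : nat) : nat :=
  \sum_(k < g.+1)
    #|[set t : k.-tuple 'I_g.+1 |
        `[< in_family (map val t) /\ genus (map val t) = g >] ]|.

Local Open Scope ring_scope.

Definition growth_rate (R : realType) : \bar R :=
  limn_esup (fun g : nat => ((a_count g)%:R `^ (g%:R^-1) : R)%:E).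

Definition I4 (R : realType) (q : R) : R :=
  3 * q ^+ 4 + 4 * q ^+ 5 + 3 * q ^+ 6 + 2 * q ^+ 7 + q ^+ 8.

Definition I5 (R : realType) (q : R) : R :=
  4 * q ^+ 5 + 5 * q ^+ 6 + 4 * q ^+ 7 + 3 * q ^+ 8 + 2 * q ^+ 9 + q ^+ 10.

(* Main.v *)
Require Import Defs.
From HB Require Import structures.
From mathcomp Require Import all_boot all_order all_algebra.
From mathcomp Require Import all_classical all_reals all_analysis.
From mathcomp Require Import zify ring lra.
Import Order.TTheory GRing.Theory Num.Theory.


Fixpoint lists2 (M L : nat) : seq (seq nat) :=
  match L with
  | 0 => [:: [::]]
  | 1 => [seq [:: a] | a <- iota 1 M]
  | L'.+2 => [seq a :: rcons r.2 r.1 | a <- iota 1 M,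
               r <- [seq (b, y) | b <- iota 1 M, y <- lists2 M L']]
  end.

Definition palb (c : nat) (y : seq nat) : bool :=
  all (fun i => c <= nth 0 y i + nth 0 y (size y - i.+1)) (iota 0 (size y)).

Lemma mem_lists2 M L y : size y = L -> all (fun a => 0 < a <= M) y ->
  y \in lists2 M L.
Proof.
elim: L {-2}L (leqnn L) y => [|N IH] L HL y.
  by case: L HL => // _; case: y.
case: L HL => [|[|L]] HL.
- by case: y.
- case: y => [|a [|]] //= _ /andP[Ha _].
  apply/mapP; exists a => //; rewrite mem_iota; lia.
- case: y => [|a y1] //= [Hs] /andP[Ha Hy1].
  case/lastP: y1 Hs Hy1 => [|y b] //; rewrite size_rcons => -[Hs].
  rewrite all_rcons => /andP[Hb Hy].
  apply: (@allpairs_f _ _ _ (fun a (r : nat * seq nat) => a :: rcons r.2 r.1) _ _ a (b, y)).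
    rewrite mem_iota; lia.
  apply: (allpairs_f (fun b y => (b, y))). rewrite mem_iota; lia.
  apply: IH => //; lia.
Qed.

Lemma size_lists2 M L y : y \in lists2 M L -> size y = L.
Proof.
elim: L {-2}L (leqnn L) y => [|N IH] L HL y.
  by case: L HL => // _; rewrite inE => /eqP->.
case: L HL => [|[|L]] HL.
- by rewrite inE => /eqP->.
- by case/mapP => a _ ->.
- case/allpairsP => -[a r] /= [_ /allpairsP[[b z] /= [_ Hz ->]] ->] /=.
  by rewrite size_rcons (IH L) //; lia.
Qed.

Lemma palb_cons c a b y :
  palb c (a :: rcons y b) = (c <= a + b) && palb c y.
Proof.
rewrite /palb [size (a :: _)]/= size_rcons.
rewrite (_ : iota 0 (size y).+2 = 0 :: map (addn 1) (iota 0 (size y).+1));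
  last by rewrite /= -iotaDl.
rewrite -[(size y).+1]addn1 iotaD /= map_cat all_cat /= andbT add0n.
have -> : ((size y + 1).+1 - 1 = (size y).+1)%N by lia.
have -> : ((size y + 1).+1 - (1 + size y).+1 = 0)%N by lia.
rewrite /= nth_rcons ltnn eqxx (addnC b a) all_map.
case: (c <= a + b) => //=; rewrite andbT.
apply: eq_in_all => i; rewrite mem_iota => /andP[_ Hi] /=.
rewrite nth_rcons Hi.
have -> : ((size y + 1).+1 - (1 + i).+1 = (size y - i.+1).+1)%N by lia.
by rewrite /= nth_rcons (_ : size y - i.+1 < size y) //; lia.
Qed.

Lemma lists2_SS M L : lists2 M L.+2 = [seq a :: rcons r.2 r.1 | a <- iota 1 M,
               r <- [seq (b, y) | b <- iota 1 M, y <- lists2 M L]].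
Proof. by []. Qed.

Section Real.
Variable R : realType.
Local Open Scope ring_scope.

Definition Pal (c M L : nat) (q : R) :=
  \sum_(y <- lists2 M L | palb c y) q ^+ sumn y.
Definition Ic (c M : nat) (q : R) :=
  \sum_(a <- iota 1 M) \sum_(b <- iota 1 M) (if (c <= a + b)%N then q ^+ (a + b) else 0).
Definition Sq (M : nat) (q : R) := \sum_(a <- iota 1 M) q ^+ a.

Lemma Pal_rec c M L q : Pal c M L.+2 q = Ic c M q * Pal c M L q.
Proof.
rewrite /Pal lists2_SS big_mkcond big_allpairs_dep /Ic big_distrl /=.
apply eq_bigr => a _; rewrite big_allpairs_dep big_distrl /=.
apply eq_bigr => b _; rewrite [X in _ = _ * X]big_mkcond big_distrr /=.
apply eq_bigr => y _; rewrite palb_cons /= sumn_rcons.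
case: (c <= a + b)%N; rewrite ?mul0r //=.
case: (palb c y); rewrite ?mulr0 // -exprD; congr (_ ^+ _); lia.
Qed.

Lemma Pal0 c M q : Pal c M 0 q = 1.
Proof. by rewrite /Pal /= big_cons big_nil /palb /= addr0. Qed.

Lemma Pal1 c M q : 0 <= q -> Pal c M 1 q <= Sq M q.
Proof.
move=> q0; rewrite /Pal /Sq /= big_map big_mkcond /=.
apply: ler_sum => a _; case: ifP => _ /=; rewrite ?addn0 ?exprn_ge0 //.
Qed.

Lemma Ic_ge0 c M q : 0 <= q -> 0 <= Ic c M q.
Proof.
move=> q0; apply: sumr_ge0 => a _; apply: sumr_ge0 => b _.
by case: ifP => // _; rewrite exprn_ge0.
Qed.

Lemma Pal_bound c M L q : 0 <= q ->
  Pal c M L q <= (1 + Sq M q) * Ic c M q ^+ L./2.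
Proof.
move=> q0.
have S0 : 0 <= Sq M q by apply: sumr_ge0 => a _; rewrite exprn_ge0.
have I0 := @Ic_ge0 c M q q0.
suff: forall L, Pal c M L q <= (1 + Sq M q) * Ic c M q ^+ L./2 /\
               Pal c M L.+1 q <= (1 + Sq M q) * Ic c M q ^+ L.+1./2.
  by move=> /(_ L) [].
clear L.
elim=> [|n [IH1 IH2]].
  split; first by rewrite Pal0 /= expr0 mulr1 lerDl.
  by rewrite /= expr0 mulr1; apply: le_trans (@Pal1 c M q q0) _; rewrite lerDr.
split => //.
rewrite Pal_rec /= exprS mulrCA.
by apply: (@ler_wpM2l R (Ic c M q) I0).
Qed.

Lemma Ic5 q : Ic 5 5 q = I5 q.
Proof.
rewrite /Ic /I5 /= !big_cons !big_nil /=.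
ring.
Qed.

Lemma Ic4 q : Ic 4 4 q = I4 q.
Proof.
rewrite /Ic /I4 /= !big_cons !big_nil /=.
ring.
Qed.
End Real.
Arguments Pal {R}. Arguments Ic {R}. Arguments Sq {R}.

Definition Sfam (k : nat) : seq (seq nat) :=
  flatten [seq [seq y ++ 5 :: z | y <- [seq u <- lists2 5 l.-1 | palb 5 u],
                                  z <- [seq u <- lists2 4 (k - l) | palb 4 u]]
          | l <- [seq l <- iota 1 k | k <= 3 * l]].

Lemma fam_mem x : in_family x -> x \in Sfam (size x).
Proof.
move=> [[n0 [Hpos H12]] [Hle [l [/andP[l1 ln] Hl Hlt H3]]]].
set n := size x in n0 Hpos H12 Hle ln Hlt H3 *.
have Hx : x = take l.-1 x ++ 5 :: drop l x.
  rewrite -{1}(cat_take_drop l.-1 x); congr (_ ++ _).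
  rewrite (drop_nth 0); last by rewrite /n in ln; lia.
  rewrite prednK; last lia. by congr (_ :: _).
apply/flatten_mapP; exists l.
  by rewrite mem_filter H3 /= mem_iota; lia.
rewrite {1}Hx; apply: allpairs_f.
- rewrite mem_filter; apply/andP; split.
  + apply/allP => i; rewrite mem_iota size_takel; last by rewrite /n in ln; lia.
    move=> /andP[_ Hi] /=.
    rewrite !nth_take; [|lia|lia].
    have [A _] := H12 i.+1 (l.-1 - i) isT ltac:(lia) ltac:(lia).
    rewrite (_ : (i.+1 + (l.-1 - i) = l)%N) in A; last lia.
    move: A; rewrite Hl /part /=.
    have -> : ((l.-1 - i).-1 = l.-1 - i.+1)%N by lia.
    by [].
  + apply: mem_lists2; first by rewrite size_takel //; rewrite /n in ln; lia.
    apply/(all_nthP 0) => i; rewrite size_takel; last by rewrite /n in ln; lia.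
    move=> Hi; rewrite nth_take //.
    have := Hpos i.+1 ltac:(lia); have := Hle i.+1 ltac:(lia).
    by rewrite /part /= => -> ->.
- rewrite mem_filter; apply/andP; split.
  + apply/allP => i; rewrite mem_iota size_drop.
    move=> /andP[_ Hi] /=.
    rewrite !nth_drop.
    have [_ A] := H12 (n - l - i) i.+1 ltac:(lia) isT ltac:(lia).
    rewrite (_ : (n.+1 - (n - l - i) - i.+1 = l)%N) in A; last lia.
    move: A; rewrite Hl /part.
    have -> : ((n.+1 - (n - l - i)).-1 = l + i)%N by lia.
    have -> : ((n.+1 - i.+1).-1 = l + (n - l - i.+1))%N by lia.
    move=> ?; rewrite -/n; lia.
  + apply: mem_lists2; first by rewrite size_drop.
    apply/(all_nthP 0) => i; rewrite size_drop => Hi; rewrite nth_drop.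
    have := Hpos (l + i).+1 ltac:(lia); have := Hlt (l + i).+1 ltac:(lia).
    rewrite /part /= => A B; apply/andP; split => //; lia.
Qed.

Section Real2.
Variable R : realType.
Local Open Scope ring_scope.

Lemma sum_sub (w : seq nat -> R) (r s : seq (seq nat)) :
  uniq r -> {subset r <= s} -> (forall u, 0 <= w u) ->
  \sum_(u <- r) w u <= \sum_(u <- s) w u.
Proof.
move=> + + w0; elim: r s => [|u r IH] s; first by rewrite big_nil => _ _; apply: sumr_ge0.
move=> /= /andP[ur ru] sub.
have us : u \in s by apply: sub; rewrite inE eqxx.
rewrite (perm_big _ (perm_to_rem us)) !big_cons lerD2l; apply: IH => // v vr.
have := sub v; rewrite inE vr orbT => /(_ isT) vs.
have uv : v != u by apply: contraNneq ur => <-.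
by move: (perm_mem (perm_to_rem us) v); rewrite vs inE (negbTE uv) /= => /esym.
Qed.

Lemma Pal_ge0 c M L (q : R) : 0 <= q -> 0 <= Pal c M L q.
Proof. by move=> q0; apply: sumr_ge0 => y _; rewrite exprn_ge0. Qed.

End Real2.

Section Real3. Variable R : realType. Local Open Scope ring_scope.
Lemma Sfam_sum k (q : R) :
  \sum_(u <- Sfam k) q ^+ sumn u =
  \sum_(l <- [seq l <- iota 1 k | (k <= 3 * l)%N])
     q ^+ 5 * Pal 5 5 l.-1 q * Pal 4 4 (k - l) q.
Proof.
rewrite /Sfam big_flatten big_map; apply eq_bigr => l _.
rewrite big_allpairs_dep /Pal big_filter.
under eq_bigr do rewrite big_filter.
rewrite -mulrA big_distrl big_distrr /=; apply eq_bigr => y _.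
rewrite mulrCA big_distrr big_distrr /=; apply eq_bigr => z _.
by rewrite sumn_cat /= -!exprD; congr (_ ^+ _); lia.
Qed.
Lemma sum_const_le (s : seq nat) (F : nat -> R) K :
  (forall l, l \in s -> F l <= K) -> \sum_(l <- s) F l <= (size s)%:R * K.
Proof.
elim: s => [|a s IH] H; first by rewrite big_nil mul0r.
rewrite big_cons /= -add1n natrD mulrDl mul1r lerD //.
  by apply: H; rewrite inE eqxx.
by apply: IH => l ls; apply: H; rewrite inE ls orbT.
Qed.

Definition Kc (q : R) := q ^+ 5 * (1 + Sq 5 q) * (1 + Sq 4 q) * I4 q ^+ 2.

Lemma term_bound (q : R) k l : 0 <= q -> 1 <= I4 q -> I5 q * I4 q ^+ 2 <= 1 ->
  (1 <= l)%N -> (k <= 3 * l)%N ->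
  q ^+ 5 * Pal 5 5 l.-1 q * Pal 4 4 (k - l) q <= Kc q.
Proof.
move=> q0 I41 I51 l1 kl.
have S5 : 0 <= 1 + Sq 5 q.
  by apply: addr_ge0 => //; apply: sumr_ge0 => a _; exact: exprn_ge0.
have S4 : 0 <= 1 + Sq 4 q.
  by apply: addr_ge0 => //; apply: sumr_ge0 => a _; exact: exprn_ge0.
have I50 : 0 <= I5 q by rewrite -Ic5 Ic_ge0.
have I40 : 0 <= I4 q by apply: le_trans I41.
apply: le_trans (_ : q ^+ 5 * ((1 + Sq 5 q) * I5 q ^+ (l.-1)./2) *
                     ((1 + Sq 4 q) * I4 q ^+ (k - l)./2) <= _).
  apply: ler_pM; rewrite ?mulr_ge0 ?exprn_ge0 ?Pal_ge0 //.
    apply: ler_pM; rewrite ?exprn_ge0 ?Pal_ge0 //.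
    by rewrite -Ic5; apply: Pal_bound.
  by rewrite -Ic4; apply: Pal_bound.
rewrite /Kc.
set A := q ^+ 5; set B5 := 1 + Sq 5 q; set B4 := 1 + Sq 4 q.
set X := I5 q ^+ _; set Y := I4 q ^+ (k - l)./2.
have -> : A * (B5 * X) * (B4 * Y) = A * B5 * B4 * (X * Y) by ring.
apply: ler_wpM2l; first by rewrite !mulr_ge0 // exprn_ge0.
rewrite /X /Y.
set p := (l.-1)./2.
have jp : ((k - l)./2 <= p.*2.+2)%N.
  rewrite /p; have := leq_half_double (l.-1); lia.
apply: le_trans (_ : I5 q ^+ p * I4 q ^+ p.*2.+2 <= _).
  by apply: ler_wpM2l; rewrite ?exprn_ge0 // ler_weXn2l.
rewrite -addn2 exprD mulrA -mul2n mulnC exprM exprAC -exprMn.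
apply: ler_piMl; first exact: exprn_ge0.
by apply: exprn_ile1 => //; rewrite mulr_ge0 // exprn_ge0.
Qed.
End Real3.
Arguments Kc {R}.

Section Real4. Variable R : realType. Local Open Scope ring_scope.

Lemma a_count_bound (q : R) : 0 <= q -> 1 <= I4 q -> I5 q * I4 q ^+ 2 <= 1 ->
  forall g, (a_count g)%:R * q ^+ g <= (g.+1)%:R * ((g.+1)%:R * Kc q).
Proof.
move=> q0 I41 I51 g.
have S5 : 0 <= 1 + Sq 5 q.
  by apply: addr_ge0 => //; apply: sumr_ge0 => a _; exact: exprn_ge0.
have S4 : 0 <= 1 + Sq 4 q.
  by apply: addr_ge0 => //; apply: sumr_ge0 => a _; exact: exprn_ge0.
have I40 : 0 <= I4 q by apply: le_trans _ I41.
have K0 : 0 <= Kc q by rewrite /Kc !mulr_ge0 ?exprn_ge0.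
rewrite /a_count natr_sum mulr_suml.
apply: le_trans (_ : \sum_(k < g.+1) (g.+1)%:R * Kc q <= _); last first.
  by rewrite sumr_const card_ord [X in _ <= X]mulr_natl.
apply: ler_sum => k _.
set A := [set t : k.-tuple 'I_g.+1 | _].
rewrite -sumr_const mulr_suml.
rewrite (eq_bigr (fun t : k.-tuple 'I_g.+1 => q ^+ sumn (map val t))); last first.
  by move=> t; rewrite inE => /asboolP [_ Hg]; rewrite mul1r; congr (_ ^+ _); exact: esym Hg.
rewrite -big_enum.
have -> : \sum_(t <- enum A) q ^+ sumn (map val t) =
   \sum_(u <- map (fun t : k.-tuple 'I_g.+1 => map val t) (enum A)) q ^+ sumn u.
  by rewrite big_map.
apply: le_trans (_ : \sum_(u <- Sfam k) q ^+ sumn u <= _).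
  apply: sum_sub; last by move=> u; exact: exprn_ge0.
    rewrite map_inj_uniq ?enum_uniq //.
    by move=> t1 t2 /(inj_map val_inj) /val_inj.
  move=> u /mapP [t]; rewrite mem_enum inE => /asboolP [Hf _] ->.
  by have := fam_mem _ Hf; rewrite size_map size_tuple.
rewrite Sfam_sum.
apply: le_trans (_ : (size [seq l <- iota 1 k | (k <= 3 * l)%N])%:R * Kc q <= _).
  apply: sum_const_le => l; rewrite mem_filter mem_iota => /andP [kl /andP [l1 _]].
  exact: term_bound.
apply: ler_wpM2r => //; rewrite ler_nat.
rewrite size_filter; apply: leq_trans (count_size _ _) _; rewrite size_iota; have := ltn_ord k; lia.
Qed.
End Real4.

Section Real5. Variable R : realType. Local Open Scope ring_scope.

Lemma expr_mono (a b : R) n : 0 <= a -> a <= b -> a ^+ n <= b ^+ n.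
Proof.
move=> a0 ab; elim: n => [|n IH]; first by rewrite !expr0.
rewrite !exprS; apply: ler_pM => //; exact: exprn_ge0.
Qed.

Lemma I4_mono (a b : R) : 0 <= a -> a <= b -> I4 a <= I4 b.
Proof.
move=> a0 ab; rewrite /I4.
repeat (apply: lerD); try (apply: ler_wpM2l); by rewrite ?ler0n ?expr_mono.
Qed.

Lemma I5_mono (a b : R) : 0 <= a -> a <= b -> I5 a <= I5 b.
Proof.
move=> a0 ab; rewrite /I5.
repeat (apply: lerD); try (apply: ler_wpM2l); by rewrite ?ler0n ?expr_mono.
Qed.

Lemma I4_ge0 (a : R) : 0 <= a -> 0 <= I4 a.
Proof. move=> a0; have := @I4_mono 0 a (lexx _) a0; rewrite /I4 !expr0n /= => H; lra. Qed.
Lemma I5_ge0 (a : R) : 0 <= a -> 0 <= I5 a.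
Proof. move=> a0; have := @I5_mono 0 a (lexx _) a0; rewrite /I5 !expr0n /= => H; lra. Qed.

Lemma f_mono (a b : R) : 0 <= a -> a <= b -> I5 a * I4 a ^+ 2 <= I5 b * I4 b ^+ 2.
Proof.
move=> a0 ab; apply: ler_pM; rewrite ?exprn_ge0 ?I4_ge0 ?I5_ge0 //.
  exact: I5_mono.
by apply: expr_mono; [apply: I4_ge0|apply: I4_mono].
Qed.

Lemma golden_facts :
  let w := ((1 + Num.sqrt 5) / 2)^-1 : R in
  [/\ 0 < w, I5 w * I4 w ^+ 2 < 1 & 1 <= I4 w].
Proof.
move=> w.
set s := Num.sqrt (5 : R).
have s0 : 0 <= s by apply: sqrtr_ge0.
have s2 : s ^+ 2 = 5 by rewrite sqr_sqrtr // ler0n.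
have ws : w = (s - 1) / 2.
  have nz : (1 + s) / 2 != 0 by apply: lt0r_neq0; apply: divr_gt0; lra.
  apply: (mulfI nz); rewrite /w mulfV //.
  have -> : (1 + s) / 2 * ((s - 1) / 2) = (s ^+ 2 - 1) / 4 by field.
  by rewrite s2; field.
have w2 : w ^+ 2 + w - 1 = 0.
  by rewrite ws; move: s2; rewrite !expr2 => ?; nra.
have slo : 7379 / 3300 < s.
  rewrite ltNge; apply/negP => H.
  have : s * s <= 7379 / 3300 * (7379 / 3300) by apply: ler_pM.
  rewrite -[s * s]expr2 s2; lra.
have shi : s < 9 / 4.
  rewrite ltNge; apply/negP => H.
  have : 9 / 4 * (9 / 4) <= s * s by apply: ler_pM => //; lra.
  rewrite -[s * s]expr2 s2; lra.
have E4 : I4 w = 6 - 8 * w.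
  apply/eqP; rewrite -subr_eq0; apply/eqP.
  have -> : I4 w - (6 - 8 * w) = (w ^+ 2 + w - 1) *
     (6 - 2 * w + 4 * w ^+ 2 + 2 * w ^+ 3 + 3 * w ^+ 4 + w ^+ 5 + w ^+ 6)
    by rewrite /I4; ring.
  by rewrite w2 mul0r.
have E5 : I5 w * I4 w ^+ 2 = 4080 - 6600 * w.
  apply/eqP; rewrite -subr_eq0; apply/eqP.
  have -> : I5 w * I4 w ^+ 2 - (4080 - 6600 * w) = (w ^+ 2 + w - 1) *
     (4080 - 2520 * w + 1560 * w ^+ 2 - 960 * w ^+ 3 + 600 * w ^+ 4
      - 360 * w ^+ 5 + 240 * w ^+ 6 - 120 * w ^+ 7 + 120 * w ^+ 8
      + 120 * w ^+ 10 + 120 * w ^+ 11 + 240 * w ^+ 12 + 324 * w ^+ 13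
      + 423 * w ^+ 14 + 455 * w ^+ 15 + 441 * w ^+ 16 + 366 * w ^+ 17
      + 269 * w ^+ 18 + 171 * w ^+ 19 + 95 * w ^+ 20 + 44 * w ^+ 21
      + 17 * w ^+ 22 + 5 * w ^+ 23 + w ^+ 24)
    by rewrite /I4 /I5; ring.
  by rewrite w2 mul0r.
split.
- rewrite ws; lra.
- rewrite E5 ws; lra.
- rewrite E4 ws; lra.
Qed.
End Real5.

Section Real6. Variable R : realType. Local Open Scope ring_scope.

Lemma bernoulli (x : R) h : 0 <= x -> 1 + h%:R * x <= (1 + x) ^+ h.
Proof.
move=> x0; elim: h => [|h IH]; first by rewrite expr0 mul0r addr0.
rewrite exprS -addn1 natrD mulrDl mul1r.
have hx : 0 <= h%:R * x by rewrite mulr_ge0 // ler0n.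
nra.
Qed.

Lemma poly_le_exp (C d : R) : 0 < d ->
  exists N, forall g, (N <= g)%N -> C * (g.+1%:R) ^+ 2 <= (1 + d) ^+ g.
Proof.
move=> d0.
have [x [x0 x1 xd]] : exists x : R, [/\ 0 < x, x <= 1 & 7 * x <= d].
  case: (lerP d 1) => H.
    exists (d / 7); split; lra.
  exists (1 / 7); split; lra.
have t3 : (1 + x) ^+ 3 <= 1 + d.
  have x2 : x * x <= x by nra.
  have x3 : x * x * x <= x * x by nra.
  have -> : (1 + x) ^+ 3 = 1 + 3 * x + 3 * (x * x) + x * x * x by ring.
  lra.
have x30 : 0 < x ^+ 3 by rewrite exprn_gt0.
set B := 4 * `|C| / x ^+ 3.
have B0 : 0 <= B by rewrite /B divr_ge0 ?mulr_ge0 ?normr_ge0 // ltW.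
exists (Num.Def.archi_bound B).+1 => g Hg.
have HB : B <= g%:R.
  apply: ltW; apply: lt_le_trans (archi_boundP B0) _; rewrite ler_nat; lia.
have g1 : 1 <= (g%:R : R) by rewrite ler1n; lia.
set G := (g%:R : R) in HB g1 *.
have -> : (g.+1%:R : R) = G + 1 by rewrite -addn1 natrD.
have H1 : 4 * `|C| <= G * x ^+ 3 by rewrite -ler_pdivrMr.
have Cn : 0 <= `|C| := normr_ge0 C.
have H2 : C * (G + 1) ^+ 2 <= 4 * `|C| * G ^+ 2.
  apply: le_trans (_ : `|C| * (G + 1) ^+ 2 <= _).
    by apply: ler_wpM2r; [apply: exprn_ge0; lra | exact: ler_norm].
  rewrite -mulrA [X in _ <= X]mulrCA; apply: ler_wpM2l => //.
  rewrite !expr2; nra.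
apply: le_trans H2 _.
apply: le_trans (_ : G * x ^+ 3 * G ^+ 2 <= _).
  by apply: ler_wpM2r => //; apply: exprn_ge0; lra.
have -> : G * x ^+ 3 * G ^+ 2 = (G * x) ^+ 3 by ring.
apply: le_trans (_ : ((1 + x) ^+ g) ^+ 3 <= _).
  apply: expr_mono; first by rewrite mulr_ge0 //; lra.
  have := @bernoulli x g (ltW x0); rewrite -/G => ?; nra.
rewrite exprAC; apply: expr_mono => //.
apply: exprn_ge0; lra.
Qed.
End Real6.

Local Open Scope ring_scope.

Theorem proposition11p4 (R : realType) (rho : R) :
  0 < rho -> 1 - I5 rho * I4 rho ^+ 2 = 0 ->
  [/\ ((1 + Num.sqrt 5) / 2)^-1 < rho,
      (growth_rate R <= (rho^-1)%:E)%E &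
      (growth_rate R < ((1 + Num.sqrt 5) / 2)%:E)%E].
Proof.
move=> r0 Hr.
have [w0 fw I4w] := golden_facts R.
set w := ((1 + Num.sqrt 5) / 2)^-1 in w0 fw I4w *.
have Hf : I5 rho * I4 rho ^+ 2 = 1 by lra.
have wr : w < rho.
  rewrite ltNge; apply/negP => H.
  have := @f_mono R rho w (ltW r0) H; lra.
have I41 : 1 <= I4 rho by apply: le_trans I4w (@I4_mono R w rho (ltW w0) (ltW wr)).
have I51 : I5 rho * I4 rho ^+ 2 <= 1 by rewrite Hf.
have G : (growth_rate R <= (rho^-1)%:E)%E.
  apply/lee_addgt0Pr => e e0.
  have d0 : 0 < e * rho by rewrite mulr_gt0.
  have [N HN] := @poly_le_exp R (Kc rho) (e * rho) d0.
  rewrite /growth_rate limn_esup_lim; apply: lime_le; first exact: is_cvg_esups.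
  near=> n; apply: ge_ereal_sup => _ [m /= nm <-]; rewrite lee_fin.
  have Nm : (N.+1 <= m)%N by rewrite (leq_trans _ nm) //; near: n; exists N.+1.
  set a := ((a_count m)%:R : R).
  set y := rho^-1 + e.
  have y0 : 0 < y by rewrite /y addr_gt0 // invr_gt0.
  have Hc := @a_count_bound R rho (ltW r0) I41 I51 m.
  have Hp := HN m (ltnW Nm).
  have ay : a <= y ^+ m.
    have rm : 0 < rho ^+ m by rewrite exprn_gt0.
    rewrite -(ler_pM2r rm) -exprMn.
    have -> : y * rho = 1 + e * rho by rewrite /y mulrDl mulVf ?gt_eqF.
    apply: le_trans Hc _; apply: le_trans Hp; rewrite expr2 mulrCA mulrA.
    by rewrite mulrC.
  have m0 : (m%:R : R) != 0 by rewrite pnatr_eq0; lia.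
  have r1 : 0 <= (m%:R : R)^-1 by rewrite invr_ge0 ler0n.
  have an : a \in Num.nneg by rewrite nnegrE ler0n.
  have yn : y ^+ m \in Num.nneg by rewrite nnegrE exprn_ge0 // ltW.
  have H := @ge0_ler_powR R _ r1 a (y ^+ m) an yn ay.
  rewrite -(@powR_mulrn R y m (ltW y0)) -powRrM mulfV // (powRr1 (ltW y0)) in H.
    exact: H.

split => //.
apply: le_lt_trans G _; rewrite lte_fin.
rewrite -[X in _ < X]invrK ltf_pV2 // posrE //.
Unshelve. all: by end_near.
Qed.
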